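(* Let $D$ be a pre-divergence on a Polish space $\mathcal{X}$, $c$ a cost function, and $\mu\in\mathcal{P}(\mathcal{X})$. If $P\mapsto D(P\|\mu)$ is convex, then $P\mapsto D^c(P\|\mu)$ is convex.
   Context: $\mathcal{P}(\mathcal{X})$ is the set of Borel probability measures on the Polish space $\mathcal{X}$. A pre-divergence is $D:\mathcal{P}(\mathcal{X})\times\mathcal{P}(\mathcal{X})\to[0,\infty]$ with $D(\mu\|\mu)=0$ for all $\mu$. A cost function is a lower semicontinuous $c:\mathcal{X}\times\mathcal{X}\to[0,\infty]$, with OT cost $C(\mu,\nu)=\inf\{\int c\,d\pi:\pi\in\mathcal{P}(\mathcal{X}\times\mathcal{X}),\pi_1=\mu,\pi_2=\nu\}$. $D^c(\nu\|\mu)=\inf_{\eta\in\mathcal{P}(\mathcal{X})}\{D(\eta\|\mu)+C(\eta,\nu)\}$. *)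

(* Defs.v *)
From HB Require Import structures.
From mathcomp Require Import all_boot all_order all_algebra.
From mathcomp Require Import all_classical all_reals all_analysis.
From mathcomp Require Import measurable_realfun lebesgue_integral.
Set Implicit Arguments. Unset Strict Implicit. Unset Printing Implicit Defensive.
Import Order.TTheory GRing.Theory Num.Theory.
Local Open Scope classical_set_scope.
Local Open Scope ring_scope.
Local Open Scope ereal_scope.

Definition separable_space (T : topologicalType) :=
  exists S : set T, countable S /\ dense S.

Definition polish (R : realType) (X : completePseudoMetricType R) :=
  hausdorff_space X /\ separable_space X.

Definition borel (T : ptopologicalType) := g_sigma_algebraType (@open T).

Section ot.
Context {R : realType} {X : ptopologicalType}.
Local Notation BX := (borel X).

Definition coupling (mu nu : probability BX R)
    (pi : probability (BX * BX)%type R) :=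
  forall A : set BX, measurable A ->
    pi (A `*` setT) = mu A /\ pi (setT `*` A) = nu A.

Definition ot_cost (c : X * X -> \bar R) (mu nu : probability BX R) : \bar R :=
  ereal_inf [set \int[pi]_z (c z : \bar R) | pi in
                 [set pi : probability (BX * BX)%type R | coupling mu nu pi]].

Definition Dc (D : probability BX R -> probability BX R -> \bar R)
    (c : X * X -> \bar R) (nu mu : probability BX R) : \bar R :=
  ereal_inf [set D eta mu + ot_cost c eta nu | eta in
                 [set: probability BX R]].

Definition convex_on_prob (F : probability BX R -> \bar R) :=
  forall (P Q M : probability BX R) (t : R), (0 <= t <= 1)%R ->
    (forall A : set BX, measurable A ->
       M A = t%:E * P A + (1 - t)%:E * Q A) ->
    F M <= t%:E * F P + (1 - t)%:E * F Q.

Definition cost_measurable (c : X * X -> \bar R) :=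
  measurable_fun (setT : set (BX * BX)%type) (fun z : BX * BX => c z).

End ot.

(* Main.v *)
Require Import Defs.
From HB Require Import structures.
From mathcomp Require Import all_boot all_order all_algebra.
From mathcomp Require Import all_classical all_reals all_analysis.
From mathcomp Require Import measurable_realfun lebesgue_integral.
Set Implicit Arguments. Unset Strict Implicit.
Import Order.TTheory GRing.Theory Num.Theory.
Local Open Scope classical_set_scope.
Local Open Scope ring_scope.
Local Open Scope ereal_scope.

Section mix.
Context d (T : measurableType d) (R : realType).
Variables (t : R) (t0 : (0 <= t)%R) (t1 : (0 <= 1 - t)%R) (P Q : probability T R).

Definition mixm := (measure_add (mscale (NngNum t0) P) (mscale (NngNum t1) Q)).
HB.instance Definition _ := Measure.copy mixm (measure_add (mscale (NngNum t0) P) (mscale (NngNum t1) Q)).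

Let mix_setT : mixm setT = 1.
Proof.
rewrite /mixm.
rewrite measure_addE; change (t%:E * P setT + (1 - t)%:E * Q setT = 1); rewrite (probability_setT P) (probability_setT Q) !mule1 -EFinD addrCA subrr addr0 //.
Qed.

HB.instance Definition _ := Measure_isProbability.Build _ _ _ mixm mix_setT.
End mix.

Definition mixP d (T : measurableType d) (R : realType) (t : R) (t0 : (0 <= t)%R)
  (t1 : (0 <= 1 - t)%R) (P Q : probability T R) : probability T R :=
  mixm t0 t1 P Q.

Lemma mixPE d (T : measurableType d) (R : realType) (t : R) (t0 : (0 <= t)%R)
  (t1 : (0 <= 1 - t)%R) (P Q : probability T R) A :
  mixP t0 t1 P Q A = t%:E * P A + (1 - t)%:E * Q A.
Proof. exact: (measure_addE (mscale (NngNum t0) P) (mscale (NngNum t1) Q) A). Qed.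

Lemma mixP_int d (T : measurableType d) (R : realType) (t : R) (t0 : (0 <= t)%R)
  (t1 : (0 <= 1 - t)%R) (P Q : probability T R) (f : T -> \bar R) :
  (forall x, 0 <= f x) -> measurable_fun setT f ->
  \int[mixP t0 t1 P Q]_x f x = t%:E * \int[P]_x f x + (1 - t)%:E * \int[Q]_x f x.
Proof.
move=> f0 mf.
rewrite /mixP /mixm ge0_integral_measure_add //.
by rewrite !ge0_integral_mscale.
Qed.

Lemma inf_mix (R : realType) (t : R) (A B : set (\bar R)) (z : \bar R) :
  (0 < t)%R -> (0 < 1 - t)%R ->
  (forall x, A x -> 0 <= x) -> (forall y, B y -> 0 <= y) ->
  (forall x y, A x -> B y -> z <= t%:E * x + (1 - t)%:E * y) ->
  z <= t%:E * ereal_inf A + (1 - t)%:E * ereal_inf B.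
Proof.
move=> tp sp A0 B0 H.
rewrite -!ereal_inf_pZl //.
set a := ereal_inf _; set b := ereal_inf _.
have a0 : 0 <= a.
  apply/ereal_infP => _ [x Ax <-]; apply: mule_ge0; [rewrite lee_fin ltW // | exact: A0].
have b0 : 0 <= b.
  apply/ereal_infP => _ [x Ax <-]; apply: mule_ge0; [rewrite lee_fin ltW // | exact: B0].
rewrite leNgt; apply/negP => abz.
have ay : a \is a fin_num.
  rewrite ge0_fin_numE //; apply: (le_lt_trans _ (lt_le_trans abz (leey _))).
  exact: leeDl.
have by_ : b \is a fin_num.
  rewrite ge0_fin_numE //; apply: (le_lt_trans _ (lt_le_trans abz (leey _))).
  exact: leeDr.
have : a < z - b by rewrite lteBrDr.
move/ereal_inf_lt => [_ [x Ax <-]] xl.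
have xf : t%:E * x \is a fin_num.
  rewrite ge0_fin_numE; last by apply: mule_ge0; [rewrite lee_fin ltW // | exact: A0].
  exact: (lt_le_trans xl (leey _)).
have : b < z - t%:E * x by rewrite lteBrDr // addeC -lteBrDr.
move/ereal_inf_lt => [_ [y By <-]] yl.
have := H _ _ Ax By; rewrite leNgt => /negP; apply.
by move: yl; rewrite lteBrDr // addeC.
Qed.

Section main.
Context {R : realType} {X : ptopologicalType}.
Local Notation BX := (borel X).

Lemma ot_cost_ge0 (c : X * X -> \bar R) (mu nu : probability BX R) :
  (forall z, 0 <= c z) -> 0 <= ot_cost c mu nu.
Proof.
move=> c0; apply/ereal_infP => _ [pi _ <-]; exact: integral_ge0.
Qed.

Lemma ot_cost_eq (c : X * X -> \bar R) (eta M Q : probability BX R) :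
  (forall A, measurable A -> M A = Q A) -> ot_cost c eta M = ot_cost c eta Q.
Proof.
move=> HM; rewrite /ot_cost; congr ereal_inf; apply/seteqP; split => _ [pi hpi <-];
  exists pi => //= A mA; have [h1 h2] := hpi A mA; split => //; rewrite h2 ?HM //.
Qed.

Lemma Dc_eq_le D (c : X * X -> \bar R) (mu M Q : probability BX R) :
  (forall A, measurable A -> M A = Q A) -> Dc D c M mu <= Dc D c Q mu.
Proof.
move=> HM; apply/ereal_infP => _ [eta _ <-]; apply: ereal_inf_lbound.
by exists eta => //; rewrite (ot_cost_eq _ _ HM).
Qed.

Lemma ot_cost_mix (c : X * X -> \bar R) (t : R) (t0 : (0 <= t)%R) (t1 : (0 <= 1 - t)%R)
  (eta1 eta2 P Q M : probability BX R) :
  (0 < t)%R -> (0 < 1 - t)%R ->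
  (forall z, 0 <= c z) -> cost_measurable c ->
  (forall A, measurable A -> M A = t%:E * P A + (1 - t)%:E * Q A) ->
  ot_cost c (mixP t0 t1 eta1 eta2) M <=
    t%:E * ot_cost c eta1 P + (1 - t)%:E * ot_cost c eta2 Q.
Proof.
move=> tp sp c0 cm HM; apply: inf_mix => //.
- by move=> _ [pi _ <-]; exact: integral_ge0.
- by move=> _ [pi _ <-]; exact: integral_ge0.
move=> _ _ [pi1 h1 <-] [pi2 h2 <-].
apply: ereal_inf_lbound; exists (mixP t0 t1 pi1 pi2); last first.
  by rewrite mixP_int.
move=> A mA; have [a1 b1] := h1 A mA; have [a2 b2] := h2 A mA.
by rewrite !mixPE a1 b1 a2 b2 HM.
Qed.

End main.

Theorem lemma1 (R : realType) (X : completePseudoMetricType R)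
  (hX : polish X)
  (D : probability (borel X) R -> probability (borel X) R -> \bar R)
  (D_ge0 : forall P Q, 0 <= D P Q)
  (D_refl : forall P, D P P = 0)
  (c : X * X -> \bar R)
  (c_ge0 : forall z, 0 <= c z)
  (c_lsc : lower_semicontinuous c)
  (c_meas : cost_measurable c)
  (mu : probability (borel X) R) :
  convex_on_prob (fun P => D P mu) ->
  convex_on_prob (fun P => Dc D c P mu).
Proof.
move=> convD P Q M t /andP[t0 t1] HM /=.
have s0 : (0 <= 1 - t)%R by rewrite subr_ge0.
have [t0e|tp] := eqVneq t 0%R.
  rewrite t0e -[0%:E]/(0 : \bar R) mul0e add0e subr0 mul1e; apply: Dc_eq_le => A mA.
  by rewrite HM // t0e -[0%:E]/(0 : \bar R) mul0e add0e subr0 mul1e.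
have [t1e|sp] := eqVneq t 1%R.
  rewrite t1e subrr -[0%:E]/(0 : \bar R) mul0e adde0 mul1e; apply: Dc_eq_le => A mA.
  by rewrite HM // t1e subrr -[0%:E]/(0 : \bar R) mul0e adde0 mul1e.
have tp' : (0 < t)%R by rewrite lt0r tp t0.
have sp' : (0 < 1 - t)%R by rewrite subr_gt0 lt_neqAle sp t1.
apply: inf_mix => //.
- by move=> _ [eta _ <-]; rewrite adde_ge0 // ot_cost_ge0.
- by move=> _ [eta _ <-]; rewrite adde_ge0 // ot_cost_ge0.
move=> _ _ [eta1 _ <-] [eta2 _ <-].
set eta := mixP t0 s0 eta1 eta2.
apply: (@le_trans _ _ (D eta mu + ot_cost c eta M)).
  by apply: ereal_inf_lbound; exists eta.
have hD : D eta mu <= t%:E * D eta1 mu + (1 - t)%:E * D eta2 mu.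
  apply: (convD eta1 eta2 eta t); first by rewrite t0 t1.
  by move=> A mA; rewrite mixPE.
have hC := ot_cost_mix t0 s0 eta1 eta2 tp' sp' c_ge0 c_meas HM.
rewrite !ge0_muleDr ?ot_cost_ge0 // addeACA.
exact: leeD.
Qed.
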